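(* Let $n\ge3$ be odd and let $D\subseteq\{0,1,\dots,n-1\}$ with $|D|=2$. Then the unidirectional cycle $\overrightarrow{C_n}$ is $(\{0,1,\dots,n-1\}\setminus D)$-antimagic.
   Context: An oriented graph is a simple graph each of whose edges is given one direction. For vertices $u,v$, $d(u,v)$ is the length of a shortest directed path from $u$ to $v$ ($d(u,u)=0$). For a set $D$ of nonnegative integers, $N_D(v)=\{y : d(v,y)\in D\}$; for a bijection $f:V\to\{1,\dots,|V|\}$, $\omega_D(v)=\sum_{x\in N_D(v)}f(x)$ (empty sum $0$); $f$ is $D$-antimagic if distinct vertices have distinct $D$-weights, and the graph is $D$-antimagic if such an $f$ exists. The unidirectional cycle $\overrightarrow{C_n}$ ($n\ge3$) has vertices $v_1,\dots,v_n$ and arcs $(v_i,v_{i+1})$ for $1\le i\le n-1$ and $(v_n,v_1)$; $d(v_i,v_j)=(j-i)\bmod n$. *)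

(* Defs.v *)
From mathcomp Require Import all_boot.
Set Implicit Arguments. Unset Strict Implicit. Unset Printing Implicit Defensive.

(* Unidirectional cycle C_n on vertices 'I_n (v_{i+1} <-> index i),
   arcs i -> i+1 mod n.  Directed distance d(v_i, v_j) = (j - i) mod n. *)
Definition cyc_dist (n : nat) (u v : 'I_n) : nat := (v + n - u) %% n.

(* A labeling is a bijection f : V -> {1,...,n}; we encode it as a
   bijection g : 'I_n -> 'I_n with f x = (g x).+1. *)
Definition D_weight (n : nat) (D : pred nat) (g : 'I_n -> 'I_n) (v : 'I_n) : nat :=
  \sum_(x : 'I_n | D (cyc_dist v x)) (g x).+1.

Definition D_antimagic_labeling (n : nat) (D : pred nat) (g : 'I_n -> 'I_n) : Prop :=
  bijective g /\ injective (D_weight D g).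

Definition cycle_D_antimagic (n : nat) (D : pred nat) : Prop :=
  exists g : 'I_n -> 'I_n, D_antimagic_labeling D g.

(* Main.v *)
Require Import Defs.
From mathcomp Require Import all_boot.
From mathcomp Require Import zify.

Section Aux.
Variables (n : nat) (D : {set 'I_n}).
Hypothesis n_gt0 : 0 < n.

Definition shf (v d : 'I_n) : 'I_n := Ordinal (ltn_pmod (v + d) n_gt0).
Definition unshf (v x : 'I_n) : 'I_n := Ordinal (ltn_pmod (x + n - v) n_gt0).

Lemma shfK v : cancel (shf v) (unshf v).
Proof.
move=> d; apply: val_inj => /=.
have hv : v < n := ltn_ord v.
rewrite -addnBA; last by apply: ltnW.
rewrite modnDml.
have -> : v + d + (n - v) = d + n by lia.
by rewrite modnDr modn_small.
Qed.

Lemma unshfK v : cancel (unshf v) (shf v).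
Proof.
move=> x; apply: val_inj => /=.
have hv : v < n := ltn_ord v.
have hx : x < n := ltn_ord x.
rewrite modnDmr.
have -> : v + (x + n - v) = x + n by lia.
by rewrite modnDr modn_small.
Qed.

Lemma cyc_shf v d : cyc_dist v (shf v d) = d.
Proof. by have := shfK v d => /(congr1 val). Qed.

Definition Pd : pred nat := fun k : nat => (k < n) && [forall d in D, k != nat_of_ord d].

Lemma weight_eq v :
  @D_weight n Pd id v = \sum_(d : 'I_n | d \notin D) ((v + d) %% n).+1.
Proof.
rewrite /D_weight (reindex (shf v)); last first.
  by exists (unshf v) => x _; [apply: shfK | apply: unshfK].
apply: eq_big => [d|d _ //].
rewrite cyc_shf /Pd ltn_ord /=.
apply/forallP/idP => [H|H x].
  apply/negP => Hd; move: (H d); by rewrite Hd eqxx.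
apply/implyP => Hx; apply/negP => /eqP /val_inj Hdx; by move: H; rewrite Hdx Hx.
Qed.

Lemma weight_mod v :
  @D_weight n Pd id v = #|[predC D]| * v + \sum_(d : 'I_n | d \notin D) d.+1 %[mod n].
Proof.
rewrite weight_eq -modn_summ.
rewrite (eq_bigr (fun d : 'I_n => (v + d.+1) %% n)); last first.
  by move=> d _; rewrite addnS -(addn1 ((v + d) %% n)) modnDml addn1.
rewrite modn_summ big_split /=.
suff -> : \sum_(i < n | i \notin D) v = #|[predC D]| * v by [].
by rewrite -sum_nat_const; apply: eq_bigl => i; rewrite !inE.
Qed.

End Aux.

Theorem mainTheorem16 (n : nat) (D : {set 'I_n}) :
  3 <= n -> odd n -> #|D| = 2 ->
  cycle_D_antimagic n (fun k : nat => (k < n) && [forall d in D, k != val d]).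
Proof.
move=> n3 nodd cD.
have n_gt0 : 0 < n by lia.
exists id; split; first by exists id.
move=> u v Huv.
have h2 := @weight_mod n D n_gt0 v; have := @weight_mod n D n_gt0 u; rewrite /Pd /= in h2 *; rewrite Huv h2 => /eqP.
have hC : #|[predC D]| = n - 2 by have := cardC D; rewrite cD card_ord; lia.
rewrite eqn_modDr hC => /eqP H.
have [j Hj] : exists j, n = j.*2 + 3.
  exists (n./2 - 1); have := odd_double_half n; rewrite nodd /=; lia.
have key : forall w, w = (n - 2) * w * j.+1 %[mod n].
  move=> w; have -> : (n - 2) * w * j.+1 = w + (j * w) * n by rewrite Hj; lia.
  by rewrite addnC modnMDl.
apply: val_inj; rewrite /= -(modn_small (ltn_ord u)) -(modn_small (ltn_ord v)).
by rewrite key (key v) -modnMml -H modnMml.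
Qed.
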